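(* Let $n\ge1$ and $n'=\lfloor n/2\rfloor$. The ring $R_n$ is generated as an $R'_n$-module by the set $\{h_{i_1}\cdots h_{i_{n'}}\mid i_1,\dots,i_{n'}\in\mathbb Z_{\ge0}\}$.
   Context: $R_n=\mathbb C[x_1,\dots,x_n]^{S_n}$; $e_k$ and $h_k$ denote the elementary and complete homogeneous symmetric polynomials in $x_1,\dots,x_n$ ($h_0=1$). $R'_n=\mathbb C[e_{2j+1}\mid 0\le j\le (n-1)/2]\subset R_n$. *)

(* Defs.v *)
From mathcomp Require Import all_boot all_order all_algebra.
From mathcomp Require Import mpoly.
From mathcomp Require Import reals.
From mathcomp Require Import complex.

Set Implicit Arguments.
Unset Strict Implicit.
Unset Printing Implicit Defensive.

Import Order.TTheory GRing.Theory Num.Theory.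
Local Open Scope ring_scope.

Notation CC R := (complex R).

Definition hsym (K : comNzRingType) (n k : nat) : {mpoly K[n]} :=
  \sum_(m : 'X_{1..n < k.+1} | mdeg m == k) 'X_[m].

Definition esym (K : comNzRingType) (n k : nat) : {mpoly K[n]} := mesym n K k.

(* The generators e_{2j+1}, 0 <= j <= (n-1)/2, i.e. j < uphalf n. *)
Definition odd_esyms (K : comNzRingType) (n : nat) : (uphalf n).-tuple {mpoly K[n]} :=
  [tuple esym K n (2 * j + 1) | j < uphalf n].

(* Membership in R'_n = K[e_{2j+1} | 0 <= j <= (n-1)/2]: p is a polynomial
   expression in the odd elementary symmetric polynomials. *)
Definition in_Rprime (K : comNzRingType) (n : nat) (p : {mpoly K[n]}) : Prop :=
  exists q : {mpoly K[uphalf n]}, p = q \mPo odd_esyms K n.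

(* Main.v *)
Require Import Defs.
From mathcomp Require Import all_boot all_order all_algebra.
From mathcomp Require Import mpoly.
From mathcomp Require Import reals.
From mathcomp Require Import complex.
From mathcomp Require Import all_boot all_order all_algebra.
From mathcomp Require Import mpoly.
From mathcomp Require Import fingroup perm zify ring.

Import Order.TTheory GRing.Theory Num.Theory.
Local Open Scope ring_scope.

Set Implicit Arguments.
Unset Strict Implicit.
Unset Printing Implicit Defensive.


Section Basic.
Variable (K : comNzRingType) (n : nat).
Local Notation P := {mpoly K[n]}.
Local Notation h := (hsym K n).
Local Notation e := (mesym n K).

Lemma mcoeff_hsym k mu : (h k)@_mu = (mdeg mu == k)%:R.
Proof.
rewrite /hsym raddf_sum /=.
have [Hd|Hd] := eqVneq (mdeg mu) k.
  have lt : (mdeg mu < k.+1)%N by rewrite Hd.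
  rewrite (bigD1 (BMultinom lt)) /= ?Hd ?eqxx //= mcoeffX eqxx big1 ?addr0 //.
  move=> b /andP[_ nb]; rewrite mcoeffX; case: eqP => // E; exfalso.
  move: nb; have -> : b = BMultinom lt by apply/val_inj; rewrite /= E.
  by rewrite eqxx.
rewrite big1 // => b /eqP bk; rewrite mcoeffX; case: eqP => // E.
by move: Hd; rewrite -E bk eqxx.
Qed.

Lemma hsym0 : h 0 = 1.
Proof.
apply/mpolyP => mu; rewrite mcoeff_hsym mcoeff1 mdeg_eq0 //.
Qed.

Lemma mcoeffXM (p : P) a mu :
  ('X_[a] * p)@_mu = if (a <= mu)%MM then p@_(mu - a) else 0.
Proof.
case: ifP => le.
  by rewrite -{1}(submK le) addmC mulrC mcoeffMX.
rewrite {1}[p]mpolyE mulr_sumr raddf_sum /= big1 // => m _.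
rewrite -scalerAr -mpolyXD mcoeffZ mcoeffX; case: eqP; last by rewrite mulr0.
by move=> E; move: le; rewrite -E lem_addr.
Qed.

End Basic.


Section Newton.
Variable (K : comNzRingType) (n : nat).
Local Notation P := {mpoly K[n]}.
Local Notation h := (hsym K n).
Local Notation e := (mesym n K).

Lemma mesym1_le (S : {set 'I_n}) (mu : 'X_{1..n}) :
  (mesym1 S <= mu)%MM = [forall i, (i \in S) ==> (0 < mu i)%N].
Proof.
apply/mnm_lepP/forallP => [H i|H i]; first by apply/implyP => iS; have := H i; rewrite mnmE iS.
by rewrite mnmE; have := H i; case: (i \in S).
Qed.

Lemma newton k : (0 < k)%N ->
  \sum_(i < k.+1) (-1)^+i *: (e i * h (k - i)) = 0.
Proof.
move=> k0; apply/mpolyP => mu; rewrite mcoeff0 raddf_sum /=.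
pose F (S : {set 'I_n}) : K := (-1)^+#|S| *
  (if (mesym1 S <= mu)%MM then (mdeg (mu - mesym1 S) == (k - #|S|)%N)%:R else 0).
have -> : \sum_(i < k.+1) ((-1)^+i *: (e i * h (k - i)))@_mu =
          \sum_(S : {set 'I_n} | (#|S| < k.+1)%N) F S.
  transitivity (\sum_(i < k.+1) \sum_(S : {set 'I_n}) if #|S| == i then F S else 0).
    apply: eq_bigr => i _; rewrite mcoeffZ mesymE mulr_suml raddf_sum /=.
    rewrite mulr_sumr big_mkcond /=; apply: eq_bigr => S _.
    case: eqP => // <-.
    by rewrite mcoeffXM mcoeff_hsym /F; case: ifP.
  rewrite exchange_big /= [in RHS]big_mkcond /=; apply: eq_bigr => S _.
  case: ltnP => lt.
    rewrite (bigD1 (Ordinal lt)) //= eqxx big1 ?addr0 // => i /negbTE ni.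
    by case: eqP => // E; move: ni; rewrite -(inj_eq val_inj) /= E eqxx.
  by rewrite big1 // => i _; case: eqP => // E; move: lt; rewrite E leqNgt ltn_ord.
have [Hd|Hd] := eqVneq (mdeg mu) k; last first.
  rewrite big1 // => S lt; rewrite /F; case: ifP; last by rewrite mulr0.
  move=> le; case: eqP; last by rewrite mulr0.
  move=> E; exfalso; move: Hd; rewrite -(submK le) mdegD mdeg_mesym1 E.
  by rewrite subnK ?eqxx // -ltnS.
pose f (i : 'I_n) : K := if (0 < mu i)%N then -1 else 0.
transitivity (\sum_(S : {set 'I_n}) \prod_(i in S) f i).
  rewrite [in RHS](bigID (fun S : {set 'I_n} => (#|S| < k.+1)%N)) /=.
  rewrite [X in _ = _ + X]big1 ?addr0; last first.
    move=> S; rewrite -leqNgt => gtk.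
    have /existsP[i /andP[iS /negbTE fi]] : [exists i, (i \in S) && ~~ (0 < mu i)%N].
      apply: contraLR gtk; rewrite negb_exists => /forallP H.
      rewrite -leqNgt -Hd -(submK (m := mesym1 S) (m' := mu)) ?mdegD ?mdeg_mesym1 ?leq_addl //.
      rewrite mesym1_le; apply/forallP => j; apply/implyP => jS.
      by have := H j; rewrite jS /= negbK.
    by rewrite (bigD1 i) //= /f fi mul0r.
  apply: eq_bigr => S lt; rewrite /F.
  case: ifP => le.
    have -> : (mdeg (mu - mesym1 S) == (k - #|S|)%N) = true.
      by rewrite -Hd -{2}(submK le) mdegD mdeg_mesym1 addnK eqxx.
    rewrite mulr1 -prodr_const; apply: eq_bigr => i iS; rewrite /f.
    by move: le; rewrite mesym1_le => /forallP /(_ i); rewrite iS /= => ->.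
  move: le; rewrite mesym1_le => /negbT; rewrite negb_forall; case/existsP => i.
  rewrite negb_imply => /andP[iS /negbTE fi].
  by rewrite mulr0 (bigD1 i) //= /f fi mul0r.
have := @bigA_distr K 0 1 *%R +%R _ f (fun _ => 1).
rewrite /= => E.
transitivity (\prod_i (f i + 1)); last first.
  have H : mu != 0%MM by rewrite -mdeg_eq0 Hd -lt0n.
  have /existsP[i fi] : [exists i, (0 < mu i)%N].
    apply: contraR H; rewrite negb_exists => /forallP H.
    by apply/eqP/mnmP => i; have := H i; rewrite mnm0E lt0n negbK => /eqP.
  by rewrite (bigD1 i) //= /f fi addNr mul0r.
rewrite E; apply: eq_bigr => S _; rewrite [in RHS]big_mkcond /=.
by rewrite big_mkcond.
Qed.

End Newton.


Section Rel.
Variable (K : comNzRingType) (n : nat).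
Local Notation P := {mpoly K[n]}.
Local Notation h := (hsym K n).
Local Notation e := (mesym n K).

Definition hz (z : int) : P := if z is Posz k then h k else 0.

Lemma sum_even_odd (F : nat -> P) N :
  \sum_(i < (N + N)%N) F i = \sum_(p < N) F (2 * p)%N + \sum_(p < N) F (2 * p).+1.
Proof.
elim: N => [|N IH]; first by rewrite !big_ord0 addr0.
rewrite addnS addSn !big_ord_recr /= IH.
have -> : (N + N)%N = (2 * N)%N by rewrite mul2n addnn.
by rewrite -!addrA; congr (_ + _); rewrite addrCA.
Qed.

Lemma sum_trunc (F : nat -> P) a N : (a <= N)%N -> (forall p, (a <= p)%N -> F p = 0) ->
  \sum_(p < N) F p = \sum_(p < a) F p.
Proof.
move=> le H; rewrite (big_ord_widen N F le) [RHS]big_mkcond /=; apply: eq_bigr => i _.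
by case: ltnP => // /H ->.
Qed.

Lemma rel k : (0 < k)%N ->
  \sum_(p < (n./2).+1) e (2 * p) * hz (k%:Z - (2 * p)%:Z) =
  \sum_(q < uphalf n) e (2 * q).+1 * hz (k%:Z - ((2 * q).+1)%:Z).
Proof.
move=> k0; apply/eqP; rewrite -subr_eq0; apply/eqP.
pose N := (k + n + 1)%N.
have E : \sum_(i < k.+1) (-1)^+i *: (e i * hz (k%:Z - i%:Z)) = 0.
  rewrite -[RHS](newton K n k0); apply: eq_bigr => i _; congr (_ *: (_ * _)).
  by rewrite subzn // -ltnS.
rewrite -(sum_trunc (N := (N + N)%N) (F := fun i => (-1)^+i *: (e i * hz (k%:Z - i%:Z)))) in E; last 2 first.
- by rewrite /N; lia.
- move=> p kp; rewrite /hz.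
  have : (k%:Z - p%:Z < 0)%R by rewrite subr_lt0 ltz_nat.
  by case: (k%:Z - p%:Z) => // q; rewrite mulr0 scaler0.
rewrite (sum_even_odd (fun i => (-1)^+i *: (e i * hz (k%:Z - i%:Z)))) /= in E.
have h2 := odd_double_half n; rewrite -muln2 in h2.
have h3 := odd_double_half n.+1; rewrite -muln2 in h3.
have hn2 : ((n./2).+1 <= N)%N by rewrite /N; lia.
have hu : (uphalf n <= N)%N by rewrite /N uphalfE; lia.
rewrite (sum_trunc (a := (n./2).+1) (F := fun p => (-1)^+(2 * p) *: (e (2 * p) * hz (k%:Z - (2 * p)%N%:Z))) hn2) in E; last first.
  move=> p lep; rewrite mesym_geqnE ?mul0r ?scaler0 //.
  by lia.
rewrite (sum_trunc (a := uphalf n) (F := fun p => (-1)^+(2 * p).+1 *: (e (2 * p).+1 * hz (k%:Z - (2 * p).+1%:Z))) hu) in E; last first.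
  move=> p lep; rewrite mesym_geqnE ?mul0r ?scaler0 //.
  by move: lep; rewrite leqNgt gtn_uphalf_double -leqNgt -mul2n ltnS.
rewrite -[RHS]E; congr (_ + _); last first.
  rewrite -sumrN; apply: eq_bigr => q _.
  by rewrite exprS exprM sqrrN expr1n expr1n mulr1 scaleN1r.
by apply: eq_bigr => p _; rewrite exprM sqrrN expr1n expr1n scale1r.
Qed.

End Rel.


Section M.
Variable (K : comNzRingType) (n : nat).
Local Notation P := {mpoly K[n]}.
Local Notation h := (hsym K n).
Local Notation e := (mesym n K).
Local Notation m := (n./2).

Definition inM (f : P) : Prop :=
  exists (k : nat) (r : 'I_k -> P) (idx : 'I_k -> 'I_m -> nat),
    (forall j, @in_Rprime K n (r j)) /\ f = \sum_(j < k) r j * \prod_(l < m) h (idx j l).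

Lemma Rp_mul a b : @in_Rprime K n a -> @in_Rprime K n b -> @in_Rprime K n (a * b).
Proof. by move=> [q1 ->] [q2 ->]; exists (q1 * q2); rewrite rmorphM. Qed.

Lemma Rp_C c : @in_Rprime K n (c%:MP : P).
Proof. by exists c%:MP; rewrite comp_mpolyC. Qed.

Lemma Rp_odd q : (q < uphalf n)%N -> @in_Rprime K n (e (2 * q).+1).
Proof.
move=> lt; exists 'X_(Ordinal lt); rewrite comp_mpolyXU -tnth_nth tnth_mktuple.
by rewrite /esym addn1.
Qed.

Lemma inM0 : inM 0.
Proof. by exists 0%N, (fun _ => 0), (fun _ _ => 0%N); split => [[]//|]; rewrite big_ord0. Qed.

Lemma inMD f g : inM f -> inM g -> inM (f + g).
Proof.
move=> [k1 [r1 [i1 [H1 ->]]]] [k2 [r2 [i2 [H2 ->]]]].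
exists (k1 + k2)%N, (fun j => match fintype.split j with inl a => r1 a | inr b => r2 b end),
  (fun j => match fintype.split j with inl a => i1 a | inr b => i2 b end).
split; first by move=> j; case: (fintype.split j).
rewrite big_split_ord /=; congr (_ + _); apply: eq_bigr => j _.
  by have := unsplitK (inl j : 'I_k1 + 'I_k2); rewrite /= => ->.
by have := unsplitK (inr j : 'I_k1 + 'I_k2); rewrite /= => ->.
Qed.

Lemma inM_Rp a f : @in_Rprime K n a -> inM f -> inM (a * f).
Proof.
move=> Ha [k [r [i [H ->]]]]; exists k, (fun j => a * r j), i; split.
  by move=> j; apply: Rp_mul.
by rewrite mulr_sumr; apply: eq_bigr => j _; rewrite mulrA.
Qed.

Lemma inMN f : inM f -> inM (- f).
Proof. by move=> H; rewrite -mulN1r -(rmorphN1 (@mpolyC n K)); apply: inM_Rp => //; apply: Rp_C. Qed.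

Lemma inMB f g : inM f -> inM g -> inM (f - g).
Proof. by move=> Hf Hg; apply: inMD => //; apply: inMN. Qed.

Lemma inM_sum (I : Type) (s : seq I) (F : I -> P) : (forall i, inM (F i)) -> inM (\sum_(i <- s) F i).
Proof.
move=> H; elim: s => [|x s IH]; first by rewrite big_nil; apply: inM0.
by rewrite big_cons; apply: inMD.
Qed.

Definition prodh (a : seq nat) : P := \prod_(x <- a) h x.

Lemma inM_short a : (size a <= m)%N -> inM (prodh a).
Proof.
move=> le; exists 1%N, (fun _ => 1), (fun _ l => nth 0%N a l); split.
  by move=> _; exists 1; rewrite comp_mpoly1.
rewrite big_ord1 mul1r /prodh (big_nth 0%N) big_mkord.
rewrite (big_ord_widen m (fun i => h (nth 0%N a i)) le) [LHS]big_mkcond /=.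
apply: eq_bigr => i _; case: ltnP => // le'; by rewrite nth_default // hsym0.
Qed.

End M.


Lemma det_alien (R : comNzRingType) (N : nat) (A : 'M[R]_N.+1) (w : 'I_N.+1 -> R) :
  w ord_max = 1 ->
  \det A = \sum_i (\sum_j A i j * w j) * cofactor A i ord_max.
Proof.
move=> w1.
have E j : \sum_i cofactor A i ord_max * A i j = (ord_max == j)%:R * \det A.
  have := congr1 (fun M : 'M[R]_N.+1 => M ord_max j) (mul_adj_mx A); rewrite !mxE mulr_natl => <-.
  by apply: eq_bigr => i _; rewrite mxE.
transitivity (\sum_j w j * ((ord_max == j)%:R * \det A)).
  rewrite (bigD1 ord_max) //= eqxx mul1r w1 mul1r big1 ?addr0 // => j.
  by rewrite eq_sym => /negbTE ->; rewrite mul0r mulr0.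
rewrite (eq_bigr (fun j => w j * \sum_i cofactor A i ord_max * A i j)); last first.
  by move=> j _; rewrite E.
under eq_bigr do rewrite mulr_sumr.
rewrite exchange_big /=; apply: eq_bigr => i _; rewrite mulr_suml.
by apply: eq_bigr => j _; ring.
Qed.

Lemma phi_incr (N B : nat) (a b : 'I_N -> nat) (s : 'S_N) :
  (N < B)%N -> (forall i j : 'I_N, (i <= j)%N -> (a j <= a i)%N) -> s != 1%g ->
  (forall i, (b i)%:Z = (a i)%:Z + 2 * ((s i : nat)%:Z - (i : nat)%:Z)) ->
  (\sum_i B ^ (a i) < \sum_i B ^ (b i))%N.
Proof.
move=> NB mono s1 Hb.
have [i0 Hi0] : exists i0, s i0 != i0.
  apply/existsP; apply: contraR s1; rewrite negb_exists => /forallP H.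
  by apply/eqP/permP => i; rewrite perm1; have := H i; rewrite negbK => /eqP.
case: (@arg_minnP _ i0 (fun i => s i != i) (fun i : 'I_N => val i) Hi0) => i1 Hi1 min1.
have small (j : 'I_N) : (j < i1)%N -> s j = j.
  by move=> lt; apply/eqP; apply: contraTT lt => /min1; rewrite -leqNgt.
have big1' : (i1 < s i1)%N.
  rewrite ltn_neqAle eq_sym (inj_eq val_inj) Hi1 /= leqNgt; apply/negP => lt.
  by move: Hi1; have := small _ lt; move/perm_inj => ->; rewrite eqxx.
have B0 : (0 < B)%N by case: B NB.
rewrite (bigID (fun i : 'I_N => (i < i1)%N)) [X in (_ < X)%N](bigID (fun i : 'I_N => (i < i1)%N)) /=.
have -> : (\sum_(i < N | (i < i1)%N) B ^ b i = \sum_(i < N | (i < i1)%N) B ^ a i)%N.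
  apply: eq_bigr => i lt; congr (_ ^ _)%N; apply/eqP; rewrite -eqz_nat Hb small //.
  by rewrite subrr mulr0 addr0.
rewrite ltn_add2l.
have hb : (a i1 + 2 <= b i1)%N.
  have := Hb i1; have := big1'; lia.
apply: (@leq_ltn_trans (N * B ^ a i1)%N).
  apply: (@leq_trans (\sum_(i < N | ~~ (i < i1)%N) B ^ a i1)%N).
    apply: leq_sum => i; rewrite -leqNgt => le.
    by apply: leq_pexp2l => //; apply: mono.
  apply: (@leq_trans (\sum_(i < N) B ^ a i1)%N); last by rewrite sum_nat_const card_ord.
  rewrite [X in (_ <= X)%N](bigID (fun i : 'I_N => (i < i1)%N)) /=.
  exact: leq_addl.
apply: (@leq_trans (B ^ (a i1).+1)%N).
  by rewrite expnS ltn_pmul2r // expn_gt0 B0.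
apply: (@leq_trans (B ^ b i1)%N); first by apply: leq_pexp2l => //; lia.
by rewrite (bigD1 i1) ?ltnn //= leq_addr.
Qed.


Section Block.
Variable (K : comNzRingType) (n : nat).
Local Notation P := {mpoly K[n]}.
Local Notation h := (hsym K n).
Local Notation e := (mesym n K).
Local Notation m := (n./2).
Local Notation hz := (@hz K n).
Local Notation inM := (@inM K n).
Local Notation prodh := (@prodh K n).

Definition nonneg (z : int) : bool := (0 <= z).

Lemma hz_pos (zs : seq int) : all nonneg zs ->
  \prod_(z <- zs) hz z = prodh [seq absz z | z <- zs].
Proof.
elim: zs => [|z zs IH] /=; first by rewrite /prodh !big_nil.
case/andP => z0 H; rewrite big_cons IH // /prodh big_cons.
by case: z z0.
Qed.

Lemma hz_neg (zs : seq int) : ~~ all nonneg zs -> \prod_(z <- zs) hz z = 0.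
Proof.
elim: zs => [|z zs IH] //=; rewrite negb_and => /orP[z0|H]; rewrite big_cons.
  by case: z z0 => //= k _; rewrite mul0r.
by rewrite IH // mulr0.
Qed.

Lemma sumn_abs (zs : seq int) : all nonneg zs ->
  (sumn [seq absz z | z <- zs])%:Z = \sum_(z <- zs) z.
Proof.
elim: zs => [|z zs IH] /=; first by rewrite big_nil.
case/andP => z0 H; rewrite big_cons -IH // PoszD; congr (_ + _).
by case: z z0.
Qed.

Lemma prodh_cat a b : prodh (a ++ b) = prodh a * prodh b.
Proof. by rewrite /prodh big_cat. Qed.

Lemma inM_hz (zs : seq int) (rest : seq nat) :
  (all nonneg zs -> inM (prodh ([seq absz z | z <- zs] ++ rest))) ->
  inM (\prod_(z <- zs) hz z * prodh rest).
Proof.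
case: (boolP (all nonneg zs)) => H.
  by move=> /(_ isT); rewrite prodh_cat hz_pos.
by move=> _; rewrite hz_neg // mul0r; apply: inM0.
Qed.

Lemma inM_sign k f : inM f -> inM ((-1) ^+ k * f).
Proof.
move=> H; elim: k => [|k IH]; first by rewrite expr0 mul1r.
by rewrite exprS -mulrA mulN1r; apply: inMN.
Qed.

Lemma inM_sumP (I : Type) (s : seq I) (Q : pred I) (F : I -> P) :
  (forall i, Q i -> inM (F i)) -> inM (\sum_(i <- s | Q i) F i).
Proof.
move=> H; rewrite big_mkcond; apply: inM_sum => i; case: ifP => Qi; first exact: H.
exact: inM0.
Qed.

Local Notation B := (m.+2).
Definition Phi (a : seq nat) : nat := (\sum_(x <- a) B ^ x)%N.

Lemma prod_map_enum (N : nat) (F : 'I_N -> int) :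
  \prod_(z <- [seq F r | r <- enum 'I_N]) hz z = \prod_(r < N) hz (F r).
Proof. by rewrite big_map big_enum. Qed.

Lemma sum_map_enum (N : nat) (F : 'I_N -> int) :
  \sum_(z <- [seq F r | r <- enum 'I_N]) z = \sum_(r < N) F r.
Proof. by rewrite big_map big_enum. Qed.

Lemma size_map_enum (N : nat) (F : 'I_N -> int) :
  size [seq `|z|%N | z <- [seq F r | r <- enum 'I_N]] = N.
Proof. by rewrite size_map size_map size_enum_ord. Qed.

Lemma phi_map_enum (N : nat) (F : 'I_N -> int) :
  (\sum_(x <- [seq `|z|%N | z <- [seq F r | r <- enum 'I_N]]) B ^ x = \sum_(r < N) B ^ `|F r|)%N.
Proof. by rewrite big_map big_map big_enum. Qed.

Lemma block (blk rest : seq nat) :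
  size blk = m.+1 -> all (fun x => 0 < x)%N blk -> sorted geq blk ->
  (forall b, (sumn b < sumn blk + sumn rest)%N -> inM (prodh b)) ->
  (forall b, sumn b = (sumn blk + sumn rest)%N -> size b = (m.+1 + size rest)%N ->
       (Phi (blk ++ rest) < Phi b)%N -> inM (prodh b)) ->
  inM (prodh (blk ++ rest)).
Proof.
move=> Hs Hpos Hsort H1 H2.
pose a_ (i : 'I_m.+1) := nth 0%N blk i.
have gtr : transitive geq by move=> x y z /= Ha Hb; exact: leq_trans Hb Ha.
have mono (i j : 'I_m.+1) : (i <= j)%N -> (a_ j <= a_ i)%N.
  move=> le; apply: (sorted_leq_nth gtr leqnn 0%N Hsort) => //; by rewrite inE Hs.
have pos (i : 'I_m.+1) : (0 < a_ i)%N by apply: (all_nthP 0%N Hpos); rewrite Hs.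
have Eblk : prodh blk = \prod_(i < m.+1) h (a_ i).
  by rewrite /prodh (big_nth 0%N) Hs big_mkord.
have Esum : ((sumn blk)%:Z = \sum_(i < m.+1) (a_ i)%:Z)%R.
  by rewrite sumnE (big_nth 0%N) Hs big_mkord -natz natr_sum; apply: eq_bigr => i _; rewrite natz.
have EPhi : (Phi blk = \sum_(i < m.+1) B ^ a_ i)%N by rewrite /Phi (big_nth 0%N) Hs big_mkord.
pose ent (i j : 'I_m.+1) : int := (a_ i)%:Z + 2 * ((j : nat)%:Z - (i : nat)%:Z).
pose A : 'M[P]_m.+1 := \matrix_(i, j) hz (ent i j).
pose w (j : 'I_m.+1) := e (2 * (m - j)).
have w1 : w ord_max = 1 by rewrite /w subnn muln0 mesym0E.
have detE := det_alien A w1.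
have rowE (i : 'I_m.+1) : \sum_j A i j * w j =
    \sum_(q < uphalf n) e (2 * q).+1 * hz ((a_ i + 2 * (m - i))%N%:Z - ((2 * q).+1)%:Z).
  rewrite -rel; last by have := pos i; lia.
  rewrite (reindex_inj rev_ord_inj) /=; apply: eq_bigr => j _.
  rewrite mxE /w /= mulrC; congr (_ * hz _).
    by congr e; congr (2 * _)%N; have := ltn_ord j; lia.
  by rewrite /ent /=; have := ltn_ord j; have := ltn_ord i; lia.
rewrite prodh_cat Eblk.
have -> : \prod_i h (a_ i) = \det A - \sum_(s : 'S_m.+1 | s != 1%g) (-1)^+s * \prod_i A i (s i).
  rewrite /determinant (bigD1 (1%g : 'S_m.+1)) //= odd_perm1 expr0 mul1r addrK.
  by apply: eq_bigr => i _; rewrite perm1 mxE /ent subrr mulr0 addr0.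
rewrite mulrBl; apply: inMB.
  rewrite detE mulr_suml; apply: inM_sum => i.
  rewrite rowE !mulr_suml; apply: inM_sum => q.
  rewrite -!mulrA; apply: inM_Rp; first exact: Rp_odd.
  set c0 : int := ((a_ i + 2 * (m - i))%N%:Z - ((2 * q).+1)%:Z).
  pose zs (t : 'S_m) := c0 :: [seq ent (lift i r) (lift ord_max (t r)) | r <- enum 'I_m].
  have -> : hz c0 * ((-1)^+(i + (ord_max : 'I_m.+1)) * (\det (row' i (col' (ord_max : 'I_m.+1) A)) * prodh rest)) =
      (-1)^+(i + (ord_max : 'I_m.+1)) * \sum_(t : 'S_m) (-1)^+t * (\prod_(z <- zs t) hz z * prodh rest).
    rewrite mulrCA; congr (_ * _); rewrite /determinant !mulr_suml mulr_sumr.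
    apply: eq_bigr => t _; rewrite /zs big_cons prod_map_enum.
    rewrite -!mulrA mulrCA; congr (_ * (_ * (_ * _))).
    by apply: eq_bigr => r _; rewrite !mxE.
  apply: inM_sign; apply: inM_sum => t; apply: inM_sign; apply: inM_hz => nn; apply: H1.
  rewrite -ltz_nat sumn_cat PoszD sumn_abs // /zs big_cons sum_map_enum PoszD Esum.
  rewrite /ent big_split /= -mulr_sumr big_split /= sumrN.
  have F1 : \sum_(r < m) ((lift ord_max (t r) : nat)%:Z) = \sum_(r < m) ((r : nat)%:Z).
    rewrite [RHS](reindex_inj (@perm_inj _ t)); apply: eq_bigr => r _; by rewrite lift_max.
  have F2 : \sum_(x < m.+1) ((x : nat)%:Z) = (i : nat)%:Z + \sum_(r < m) ((bump i r)%:Z).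
    by rewrite (bigD1_ord i).
  have F3 : \sum_(x < m.+1) ((x : nat)%:Z) = \sum_(r < m) ((r : nat)%:Z) + m%:Z.
    by rewrite big_ord_recr.
  have F4 : \sum_(x < m.+1) (a_ x)%:Z = (a_ i)%:Z + \sum_(r < m) (a_ (lift i r))%:Z.
    by rewrite (bigD1_ord i).
  have F5 : \sum_(r < m) ((bump i r)%:Z) = \sum_(r < m) ((r : nat)%:Z) + m%:Z - (i : nat)%:Z.
    by rewrite -F3 F2; ring.
  rewrite F1 F5 F4 /c0.
  set S1 := \sum_(r < m) (a_ (lift i r))%:Z.
  set S2 := \sum_(r < m) ((r : nat)%:Z).
  have := ltn_ord i; lia.
rewrite mulr_suml; apply: inM_sumP => s s1; rewrite -mulrA; apply: inM_sign.
have -> : \prod_(i < m.+1) A i (s i) = \prod_(r < m.+1) hz (ent r (s r)).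
  by apply: eq_bigr => i _; rewrite mxE.
rewrite -(prod_map_enum (fun i => ent i (s i))).
apply: inM_hz => nn; apply: H2.
- apply/eqP; rewrite -eqz_nat; apply/eqP.
  rewrite sumn_cat PoszD sumn_abs // sum_map_enum PoszD Esum; congr (_ + _).
  rewrite /ent big_split /= -mulr_sumr big_split /= sumrN.
  have -> : \sum_(i < m.+1) ((s i : nat)%:Z) = \sum_(i < m.+1) ((i : nat)%:Z).
    by rewrite [RHS](reindex_inj (@perm_inj _ s)).
  by rewrite subrr mulr0 addr0.
- by rewrite size_cat size_map_enum.
- rewrite /Phi !big_cat /= ltn_add2r -/(Phi blk) EPhi phi_map_enum.
  apply: (@phi_incr m.+1 B a_ (fun i => `|ent i (s i)|%N) s) => //.
  move=> i; rewrite gez0_abs //.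
  by move/allP: nn; apply; apply/mapP; exists i => //; rewrite mem_enum.
Qed.

End Block.


Section Main.
Variable (K : comNzRingType) (n : nat).
Local Notation P := {mpoly K[n]}.
Local Notation h := (hsym K n).
Local Notation e := (mesym n K).
Local Notation m := (n./2).
Local Notation inM := (@inM K n).
Local Notation prodh := (@prodh K n).
Local Notation Phi := (@Phi n).
Local Notation B := (m.+2).

Lemma phi_bound a : (Phi a <= size a * B ^ sumn a)%N.
Proof.
elim: a => [|x a IH] /=; first by rewrite /Phi big_nil.
rewrite /Phi big_cons -/(Phi a) mulSn.
apply: leq_add; first by rewrite leq_exp2l // leq_addr.
apply: leq_trans IH _; by rewrite leq_mul2l leq_exp2l // leq_addl orbT.
Qed.

Lemma all_prod a : inM (prodh a).
Proof.
suff H : forall d L F a, sumn a = d -> size a = L -> (L * B ^ d - Phi a)%N = F -> inM (prodh a).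
  exact: H _ _ _ a erefl erefl erefl.
elim/ltn_ind => d IHd; elim/ltn_ind => L IHL; elim/ltn_ind => F IHF.
move=> {}a Hd HL HF.
case: (leqP L m) => [le|gt]; first by apply: inM_short; rewrite HL.
case: (boolP (0%N \in a)) => [a0|a0].
  have pe : perm_eq a (0%N :: rem 0%N a) := perm_to_rem a0.
  have -> : prodh a = prodh (rem 0%N a).
    by rewrite /prodh (perm_big _ pe) /= big_cons /= hsym0 mul1r.
  apply: (IHL L.-1 _ _ (rem 0%N a) _ _ erefl).
  - by case: L gt {IHL IHF HF HL} => //.
  - by have := perm_sumn pe; rewrite /= add0n Hd.
  - by rewrite -HL size_rem.
pose s := sort geq a.
have gtot : total geq by move=> x y; exact: leq_total.
have gtr : transitive geq by move=> x y z /= Ha Hb; exact: leq_trans Hb Ha.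
have pe : perm_eq s a by rewrite perm_sort perm_refl.
have -> : prodh a = prodh s by rewrite /prodh (perm_big _ pe).
have Es : sumn s = d by rewrite (perm_sumn pe).
have Ls : size s = L by rewrite (perm_size pe).
have Ps : Phi s = Phi a by rewrite /Phi (perm_big _ pe).
rewrite -(cat_take_drop m.+1 s); apply: block.
- by rewrite size_takel // Ls.
- apply/allP => x /mem_take; rewrite (perm_mem pe) lt0n => xa.
  by apply: contraNneq a0 => <-.
- by apply: take_sorted; apply: sort_sorted.
- move=> b; rewrite -sumn_cat cat_take_drop Es => lt.
  exact: (IHd _ lt _ _ b erefl erefl erefl).
- move=> b; rewrite -sumn_cat cat_take_drop Es => Hb.
  rewrite size_drop Ls subnKC; last by [].
  rewrite Ps => Lb lt.
  apply: (IHF _ _ b Hb Lb erefl).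
  have := phi_bound b; rewrite Lb Hb; lia.
Qed.

End Main.


Section Final.
Variable (K : comNzRingType) (n : nat).
Local Notation P := {mpoly K[n]}.
Local Notation h := (hsym K n).
Local Notation e := (mesym n K).
Local Notation m := (n./2).
Local Notation inM := (@inM K n).
Local Notation prodh := (@prodh K n).

Lemma prodh_ord k (F : 'I_k -> nat) :
  \prod_(l < k) h (F l) = prodh [seq F l | l <- enum 'I_k].
Proof. by rewrite /prodh big_map big_enum. Qed.

Lemma inM_mulprod f L : inM f -> inM (f * prodh L).
Proof.
move=> [k [r [i [H ->]]]]; rewrite mulr_suml; apply: inM_sum => j.
rewrite -mulrA; apply: inM_Rp => //; rewrite prodh_ord -prodh_cat; exact: all_prod.
Qed.

Lemma inM_mul f g : inM f -> inM g -> inM (f * g).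
Proof.
move=> Hf [k [r [i [H ->]]]]; rewrite mulr_sumr; apply: inM_sum => j.
rewrite mulrCA; apply: inM_Rp => //; rewrite prodh_ord; exact: inM_mulprod.
Qed.

Lemma inM1 : inM 1.
Proof. by have := @inM_short K n [::] isT; rewrite /prodh big_nil. Qed.

Lemma inM_C c : inM c%:MP.
Proof. by rewrite -[c%:MP]mulr1; apply: inM_Rp; [apply: Rp_C|apply: inM1]. Qed.

Lemma inM_Z c f : inM f -> inM (c *: f).
Proof. by move=> H; rewrite -mul_mpolyC; apply: inM_Rp => //; apply: Rp_C. Qed.

Lemma inM_h k : inM (h k).
Proof. by have := all_prod K n [:: k]; rewrite /prodh big_cons big_nil mulr1. Qed.

Lemma inM_e k : inM (e k).
Proof.
elim/ltn_ind: k => k IH.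
case: k IH => [|k] IH; first by rewrite mesym0E; apply: inM1.
have := newton K n (ltn0Sn k); rewrite big_ord_recr /= subnn hsym0 mulr1 => /eqP.
rewrite addrC addr_eq0 => /eqP E.
have -> : e k.+1 = (-1)^+k.+1 *: ((-1)^+k.+1 *: e k.+1).
  by rewrite scalerA -exprMn mulrNN mulr1 expr1n scale1r.
rewrite E; apply: inM_Z; apply: inMN; apply: inM_sum => i; apply: inM_Z.
apply: inM_mul; last exact: inM_h.
exact: IH _ (ltn_ord i).
Qed.

Lemma inM_prod (I : Type) (s : seq I) (F : I -> P) :
  (forall i, inM (F i)) -> inM (\prod_(i <- s) F i).
Proof.
move=> H; elim: s => [|x s IH]; first by rewrite big_nil; apply: inM1.
by rewrite big_cons; apply: inM_mul.
Qed.

Lemma inM_exp f k : inM f -> inM (f ^+ k).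
Proof.
move=> H; elim: k => [|k IH]; first by rewrite expr0; apply: inM1.
by rewrite exprS; apply: inM_mul.
Qed.

Lemma inM_sym (f : P) : f \is symmetric -> inM f.
Proof.
move=> /sym_fundamental [t [<- _]].
rewrite comp_mpolyEX; apply: inM_sum => mu; apply: inM_Z.
rewrite comp_mpolyX; apply: inM_prod => i; apply: inM_exp.
by rewrite tnth_mktuple; apply: inM_e.
Qed.

End Final.

Unset Implicit Arguments.

Theorem mainTheorem6 (R : realType) (n : nat) (hn : (1 <= n)%N)
    (f : {mpoly (CC R)[n]}) (hf : f \is symmetric) :
  exists (k : nat) (r : 'I_k -> {mpoly (CC R)[n]}) (idx : 'I_k -> 'I_(n./2) -> nat),
    (forall j, in_Rprime (r j)) /\
    f = \sum_(j < k) r j * \prod_(l < n./2) hsym (CC R) n (idx j l).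
Proof. exact: inM_sym hf. Qed.
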